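(* Let $q$ be a prime and $m$ a positive integer. Let $C$ be a nonzero cyclic code of length $m$ over $\mathbb{F}_q$ such that no codeword of $C$ has Hamming weight $m$ (i.e. every codeword has at least one zero entry). Then the permutation group $G(C)$ of $\mathbb{Z}_q\times\mathbb{Z}_m$ is transitive and $\rho(G(C))=q$.
   Context: A linear code of length $m$ over $\mathbb{F}_q$ is a subspace of $\mathbb{F}_q^m$; it is cyclic if $(c_0,\dots,c_{m-1})\in C$ implies $(c_{m-1},c_0,\dots,c_{m-2})\in C$. The Hamming weight of a codeword is its number of nonzero entries. For a cyclic code $C$ of length $m$ over $\mathbb{F}_q$ ($q$ prime, entries identified with $\mathbb{Z}_q$), let $V=\mathbb{Z}_q\times\mathbb{Z}_m$, let $\alpha\in\mathrm{Sym}(V)$ be $\alpha(i,j)=(i,j+1)$, and for $\mathbf{c}=(c_0,\dots,c_{m-1})\in C$ let $\beta_{\mathbf{c}}(i,j)=(i+c_j,j)$. Then $G(C)=\langle \{\alpha\}\cup\{\beta_{\mathbf{c}}:\mathbf{c}\in C\}\rangle\le\mathrm{Sym}(V)$. For a permutation group $G$ on a set $V$, two elements $g,h\in G$ are intersecting if $g(v)=h(v)$ for some $v\in V$; a subset $\mathcal{F}\subseteq G$ is intersecting if every pair of its elements is intersecting. The intersection density of $G$ is $\rho(G)=\max\{|\mathcal{F}|:\mathcal{F}\subseteq G \text{ intersecting}\}/\max_{v\in V}|G_v|$, where $G_v$ is the stabilizer of $v$. *)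

(* Defs.v *)
From mathcomp Require Import all_boot all_order all_fingroup all_algebra.
Set Implicit Arguments. Unset Strict Implicit. Unset Printing Implicit Defensive.
Import GRing.Theory.
Local Open Scope ring_scope.

(* Codewords of length m over F_q are row vectors 'rV['F_q]_m; Z_m is 'I_m
   with cyclic successor ordS (m > 0 is a hypothesis of the theorem). *)

Definition cshift (q m : nat) (c : 'rV['F_q]_m) : 'rV['F_q]_m :=
  \row_j c 0 (ord_pred j).

Definition linear_code (q m : nat) (C : {set 'rV['F_q]_m}) : Prop :=
  0 \in C /\ (forall c d, c \in C -> d \in C -> c + d \in C)
  /\ (forall (a : 'F_q) c, c \in C -> a *: c \in C).

Definition cyclic_code (q m : nat) (C : {set 'rV['F_q]_m}) : Prop :=
  linear_code C /\ (forall c, c \in C -> cshift c \in C).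

Definition hweight (q m : nat) (c : 'rV['F_q]_m) : nat := #|[set j | c 0 j != 0]|.

Definition Vtype (q m : nat) := ('F_q * 'I_m)%type.

Definition alpha_fun (q m : nat) (v : Vtype q m) : Vtype q m := (v.1, ordS v.2).
Lemma alpha_inj q m : injective (@alpha_fun q m).
Proof.
move=> [i j] [i' j'] /(congr1 (fun v : Vtype q m => (v.1, ord_pred v.2))).
by rewrite /= !ordSK.
Qed.
Definition alpha (q m : nat) : {perm Vtype q m} := perm (@alpha_inj q m).

Definition beta_fun (q m : nat) (c : 'rV['F_q]_m) (v : Vtype q m) : Vtype q m :=
  (v.1 + c 0 v.2, v.2).
Lemma beta_inj q m (c : 'rV['F_q]_m) : injective (beta_fun c).
Proof.
move=> [i j] [i' j'] E.
have E1 := congr1 fst E; have E2 := congr1 snd E.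
rewrite /= in E1 E2; subst j'.
by rewrite -[i](addrK (c 0 j)) E1 addrK.
Qed.
Definition beta (q m : nat) (c : 'rV['F_q]_m) : {perm Vtype q m} := perm (@beta_inj q m c).

Definition GC (q m : nat) (C : {set 'rV['F_q]_m}) : {set {perm Vtype q m}} :=
  <<[set alpha q m] :|: [set beta c | c in C]>>%g.

Definition intersecting (T : finType) (F : {set {perm T}}) : bool :=
  [forall g in F, forall h in F, exists v, g v == h v].

Definition max_intersecting (T : finType) (G : {set {perm T}}) : nat :=
  \max_(F : {set {perm T}} | (F \subset G) && intersecting F) #|F|.

Definition max_stab (T : finType) (G : {set {perm T}}) : nat :=
  \max_(v : T) #|('C_G[v | 'P])%g|.

Definition int_density (T : finType) (G : {set {perm T}}) : rat :=
  ((max_intersecting G)%:R / (max_stab G)%:R)%R.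

(* Main.v *)
Require Import Defs.
From mathcomp Require Import all_boot all_order all_fingroup all_algebra.
Set Implicit Arguments. Unset Strict Implicit. Unset Printing Implicit Defensive.
Import GRing.Theory.

Lemma val_iter_ordS m (j : 'I_m) k : val (iter k (@ordS m) j) = ((j + k) %% m)%N.
Proof.
elim: k => [|k IH] /=; first by rewrite addn0 modn_small.
by rewrite IH -addn1 modnDml addn1 addnS.
Qed.

Lemma alphaX_fst q m k (v : Vtype q m) : (((alpha q m) ^+ k)%g v).1 = v.1.
Proof.
elim: k => [|k IH]; first by rewrite expg0 perm1.
by rewrite expgSr permM /alpha permE /alpha_fun /= IH.
Qed.

Lemma alphaX_snd q m k (v : Vtype q m) : (((alpha q m) ^+ k)%g v).2 = iter k (@ordS m) v.2.
Proof.
elim: k => [|k IH]; first by rewrite expg0 perm1.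
by rewrite expgSr permM /alpha permE /alpha_fun /= IH.
Qed.

Lemma alphaXm q m : (0 < m)%N -> ((alpha q m) ^+ m)%g = 1%g.
Proof.
move=> m0; apply/permP => v; rewrite perm1.
rewrite [LHS]surjective_pairing alphaX_fst [in RHS](surjective_pairing v); congr (_, _).
by apply/val_inj; rewrite alphaX_snd val_iter_ordS modnDr modn_small.
Qed.

Lemma alphaX_mod q m k : (0 < m)%N -> ((alpha q m) ^+ k)%g = ((alpha q m) ^+ (k %% m))%g.
Proof.
move=> m0; rewrite {1}(divn_eq k m) expgD expgM.
by rewrite -expgM mulnC expgM alphaXm // expg1n mul1g.
Qed.

Lemma alphaX_snd_inj q m (k l : nat) (v : Vtype q m) : (k < m)%N -> (l < m)%N ->
  (((alpha q m) ^+ k)%g v).2 = (((alpha q m) ^+ l)%g v).2 -> k = l.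
Proof.
move=> km lm /(congr1 val); rewrite !alphaX_snd !val_iter_ordS.
move/eqP; rewrite eqn_modDl !modn_small //; exact/eqP.
Qed.

Lemma betaM q m (c d : 'rV['F_q]_m) : (beta c * beta d)%g = beta (c + d).
Proof.
apply/permP => [[i j]]; rewrite permM /beta !permE /beta_fun /= mxE addrA //.
Qed.

Lemma beta_alpha q m (c : 'rV['F_q]_m) : (beta c * alpha q m)%g = (alpha q m * beta (cshift c))%g.
Proof.
apply/permP => [[i j]]; rewrite !permM /beta /alpha !permE /beta_fun /alpha_fun /=.
by rewrite /cshift mxE ordSK.
Qed.

Lemma beta_alphaX q m (c : 'rV['F_q]_m) k :
  (beta c * (alpha q m) ^+ k)%g = ((alpha q m) ^+ k * beta (iter k (@cshift q m) c))%g.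
Proof.
elim: k c => [|k IH] c; first by rewrite expg0 mulg1 mul1g.
by rewrite expgS mulgA beta_alpha -mulgA IH mulgA -iterSr.
Qed.

Lemma beta_inj' q m : injective (@beta q m).
Proof.
move=> c d E; apply/rowP => j.
have := congr1 (fun g : {perm Vtype q m} => (g ((0 : 'F_q)%R, j)).1) E.
by rewrite /beta !permE /beta_fun /= !add0r.
Qed.
Local Open Scope ring_scope.

Lemma code_add q m (C : {set 'rV['F_q]_m}) c d : cyclic_code C -> c \in C -> d \in C -> c + d \in C.
Proof. by case=> [[_ [H _]] _]; apply: H. Qed.
Lemma code_scale q m (C : {set 'rV['F_q]_m}) a c : cyclic_code C -> c \in C -> a *: c \in C.
Proof. by case=> [[_ [_ H]] _]; apply: H. Qed.
Lemma code_0 q m (C : {set 'rV['F_q]_m}) : cyclic_code C -> 0 \in C.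
Proof. by case=> [[H _] _]. Qed.
Lemma code_sub q m (C : {set 'rV['F_q]_m}) c d : cyclic_code C -> c \in C -> d \in C -> c - d \in C.
Proof. move=> cC hc hd; apply: code_add => //; rewrite -scaleN1r; exact: code_scale. Qed.
Lemma code_iter q m (C : {set 'rV['F_q]_m}) c k : cyclic_code C -> c \in C -> iter k (@cshift q m) c \in C.
Proof. move=> cC hc; elim: k => [|k IH] //=; by case: cC => _ H; apply: H. Qed.

Lemma iter_cshiftE q m (c : 'rV['F_q]_m) t j : (iter t (@cshift q m) c) 0 j = c 0 (iter t (@ord_pred m) j).
Proof.
elim: t j => [|t IH] j //=; by rewrite /cshift mxE IH -iterSr.
Qed.

Lemma iter_predS m t (j : 'I_m) : iter t (@ord_pred m) (iter t (@ordS m) j) = j.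
Proof. elim: t => [|t IH] //; by rewrite iterSr iterS ordSK. Qed.

Lemma exists_unit q m (C : {set 'rV['F_q]_m}) : cyclic_code C -> (exists2 c, c \in C & c != 0) ->
  forall j, exists2 e, e \in C & e 0 j = 1.
Proof.
move=> cC [c hc nz] j.
have [j0 cj0] : exists j0, c 0 j0 != 0.
  apply/existsP; apply: contraR nz => /existsPn H; apply/eqP/rowP => k.
  by rewrite mxE; apply/eqP; move: (H k); rewrite negbK.
have jm : (j0 < m)%N by [].
pose t := (j + (m - j0))%N.
have E : iter t (@ordS m) j0 = j.
  apply/val_inj; rewrite val_iter_ordS /t addnA addnC addnA subnK ?(ltnW jm) //.
  by rewrite modnDl modn_small.
exists ((c 0 j0)^-1 *: iter t (@cshift q m) c).
  by apply: code_scale => //; apply: code_iter.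
by rewrite mxE iter_cshiftE -{1}E iter_predS mulVf.
Qed.

Lemma betaE q m (c : 'rV['F_q]_m) v : beta c v = (v.1 + c 0 v.2, v.2).
Proof. by rewrite /beta permE. Qed.

Lemma beta0 q m : beta (0 : 'rV['F_q]_m) = 1%g.
Proof. apply/permP => [[i j]]; by rewrite betaE perm1 /= mxE addr0. Qed.

Definition Hset q m (C : {set 'rV['F_q]_m}) : {set {perm Vtype q m}} :=
  [set g | [exists k : 'I_m, [exists c in C, g == ((alpha q m) ^+ k * beta c)%g]]].

Lemma HsetP q m (C : {set 'rV['F_q]_m}) g : reflect (exists k : 'I_m, exists2 c, c \in C & g = ((alpha q m) ^+ k * beta c)%g) (g \in Hset C).
Proof.
rewrite inE; apply: (iffP existsP) => [[k /existsP [c /andP [hc /eqP ->]]]|[k [c hc ->]]].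
  by exists k, c.
by exists k; apply/existsP; exists c; rewrite hc eqxx.
Qed.

Lemma Hset_group q m (C : {set 'rV['F_q]_m}) : (0 < m)%N -> cyclic_code C -> group_set (Hset C).
Proof.
move=> m0 cC; apply/group_setP; split.
  apply/HsetP; exists (Ordinal m0), 0; first exact: code_0.
  apply/permP => v; rewrite expg0 mul1g perm1 /beta permE /beta_fun; case: v => i j /=. rewrite (_ : (0 : 'rV['F_q]_m) 0 j = 0) ?addr0 //; last by rewrite mxE.
move=> g h /HsetP [k [c hc ->]] /HsetP [l [d hd ->]].
apply/HsetP; exists (Ordinal (ltn_pmod (k + l) m0)), (iter l (@cshift q m) c + d).
  by apply: code_add => //; apply: code_iter.
by rewrite /= -alphaX_mod // expgD -betaM !mulgA -(mulgA _ (beta c)) beta_alphaX !mulgA.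
Qed.

Lemma GC_sub q m (C : {set 'rV['F_q]_m}) : (0 < m)%N -> cyclic_code C -> GC C \subset Hset C.
Proof.
move=> m0 cC; rewrite /GC -(gen_set_id (Hset_group m0 cC)); apply: genS.
apply/subsetP => g; rewrite inE => /orP [/set1P ->|/imsetP [c hc ->]]; apply/HsetP.
  exists (Ordinal (ltn_pmod 1 m0)), (0 : 'rV['F_q]_m); first exact: code_0.
  by rewrite /= -alphaX_mod // expg1 beta0 mulg1.
exists (Ordinal m0), c => //; by rewrite expg0 mul1g.
Qed.
Local Open Scope ring_scope.

Lemma alpha_GC q m (C : {set 'rV['F_q]_m}) : alpha q m \in GC C.
Proof. by apply: mem_gen; rewrite !inE eqxx. Qed.

Lemma beta_GC q m (C : {set 'rV['F_q]_m}) c : c \in C -> beta c \in GC C.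
Proof. by move=> hc; apply: mem_gen; rewrite inE; apply/orP; right; apply: imset_f. Qed.

Lemma GC_trans q m (C : {set 'rV['F_q]_m}) : (0 < m)%N -> cyclic_code C -> (exists2 c, c \in C & c != 0) ->
  [transitive GC C, on [set: Vtype q m] | 'P].
Proof.
move=> m0 cC nz.
apply/imsetP; exists ((0 : 'F_q), Ordinal m0); first by rewrite inE.
apply/setP => y; rewrite inE; apply/esym/orbitP.
case: y => i j; have [e he e1] := exists_unit cC nz j.
exists ((alpha q m) ^+ j * beta (i *: e))%g.
  by rewrite groupM ?groupX ?alpha_GC // beta_GC // code_scale.
rewrite /= apermE permM betaE alphaX_fst.
have -> : (((alpha q m) ^+ j)%g (0 : 'F_q, Ordinal m0)).2 = j.
  by apply/val_inj; rewrite alphaX_snd val_iter_ordS /= add0n modn_small.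
by rewrite /= mxE e1 mulr1 add0r.
Qed.

Definition C0 q m (C : {set 'rV['F_q]_m}) j := [set c in C | c 0 j == 0].

Lemma stab_eq q m (C : {set 'rV['F_q]_m}) (v : Vtype q m) : (0 < m)%N -> cyclic_code C ->
  ('C_(GC C)[v | 'P])%g = (@beta q m) @: C0 C v.2.
Proof.
move=> m0 cC; apply/setP => g; rewrite inE; apply/andP/imsetP.
  case=> gG /astab1P; rewrite /= apermE => fx.
  have /HsetP [k [c hc E]] := subsetP (GC_sub m0 cC) g gG.
  move: fx; rewrite E permM => fx.
  have k0 : val k = 0%N.
    apply: (@alphaX_snd_inj q m _ _ v); [exact: ltn_ord|exact: m0|].
    by rewrite expg0 perm1; move: (congr1 snd fx); rewrite betaE.
  have ek : k = Ordinal m0 by apply: val_inj.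
  move: fx; rewrite ek expg0 perm1 mul1g => fx; exists c => //.
  rewrite inE hc /=; apply/eqP; apply: (@addrI _ v.1); rewrite addr0.
  by move: (congr1 fst fx); rewrite betaE.
case=> c; rewrite inE => /andP [hc /eqP c0] ->; split; first exact: beta_GC.
by apply/astab1P; rewrite /= apermE betaE c0 addr0 -surjective_pairing.
Qed.

Lemma card_C0 q m (C : {set 'rV['F_q]_m}) j : prime q -> cyclic_code C -> (exists2 c, c \in C & c != 0) ->
  (q * #|C0 C j|)%N = #|C|.
Proof.
move=> qp cC nz; have [e he e1] := exists_unit cC nz j.
pose Phi (p : 'F_q * 'rV['F_q]_m) := p.1 *: e + p.2.
have HC : C = Phi @: setX [set: 'F_q] (C0 C j).
  apply/setP => c; apply/idP/imsetP.
    move=> hc; exists (c 0 j, c - c 0 j *: e).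
      rewrite !inE /=; apply/andP; split; first by apply: code_sub => //; apply: code_scale.
      by rewrite !mxE e1 mulr1 subrr.
    by rewrite /Phi /= addrC subrK.
  case=> [[a d]]; rewrite !inE /= => /andP [hd _] ->; rewrite /Phi /=.
  by apply: code_add => //; apply: code_scale.
rewrite [in RHS]HC card_in_imset ?cardsX ?cardsT ?card_Fp //.
move=> [a c] [b d]; rewrite !inE /= => /andP [hc /eqP c0] /andP [hd /eqP d0].
rewrite /Phi /= => E.
have ab : a = b.
  by move: (congr1 (fun r : 'rV['F_q]_m => r 0 j) E); rewrite !mxE e1 c0 d0 !mulr1 !addr0.
by move: E; rewrite ab => /addrI ->.
Qed.
Local Open Scope ring_scope.

Definition fsel q m (C : {set 'rV['F_q]_m}) (g : {perm Vtype q m}) : 'rV['F_q]_m :=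
  odflt 0 [pick c in C | [exists k : 'I_m, g == ((alpha q m) ^+ k * beta c)%g]].

Lemma fselP q m (C : {set 'rV['F_q]_m}) g : g \in Hset C ->
  fsel C g \in C /\ exists k : 'I_m, g = ((alpha q m) ^+ k * beta (fsel C g))%g.
Proof.
move=> /HsetP [k [c hc E]]; rewrite /fsel; case: pickP => [d /andP [hd /existsP [l /eqP El]]|H] /=.
  by split => //; exists l.
by move: (H c); rewrite hc /=; move/negbT/existsPn/(_ k); rewrite E eqxx.
Qed.

Lemma inter_upper q m (C : {set 'rV['F_q]_m}) (F : {set {perm Vtype q m}}) : (0 < m)%N -> cyclic_code C ->
  F \subset GC C -> intersecting F -> (#|F| <= #|C|)%N.
Proof.
move=> m0 cC sF iF.
have sH : F \subset Hset C := subset_trans sF (GC_sub m0 cC).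
rewrite -(card_in_imset (f := fsel C)).
  apply: subset_leq_card; apply/subsetP => c /imsetP [g gF ->].
  by case: (fselP (subsetP sH g gF)).
move=> g h gF hF E.
move: iF => /forallP/(_ g)/implyP/(_ gF)/forallP/(_ h)/implyP/(_ hF)/existsP [v /eqP Ev].
case: (fselP (subsetP sH g gF)) => _ [k Eg].
case: (fselP (subsetP sH h hF)) => _ [l Eh].
move: Ev; rewrite Eg Eh E !permM => /perm_inj Ev.
have kl : val k = val l.
  apply: (@alphaX_snd_inj q m _ _ v); [exact: ltn_ord|exact: ltn_ord|by rewrite Ev].
by rewrite (val_inj kl).
Qed.

Lemma inter_lower q m (C : {set 'rV['F_q]_m}) : cyclic_code C ->
  (forall c, c \in C -> hweight c != m) ->
  ((@beta q m) @: C \subset GC C) && intersecting ((@beta q m) @: C).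
Proof.
move=> cC hw; apply/andP; split.
  by apply/subsetP => g /imsetP [c hc ->]; apply: beta_GC.
apply/forallP => g; apply/implyP => /imsetP [c hc ->].
apply/forallP => h; apply/implyP => /imsetP [d hd ->].
have hcd : c - d \in C by apply: code_sub.
have [j hj] : exists j, (c - d) 0 j == 0.
  apply/existsP; apply: contraR (hw _ hcd) => /existsPn H; apply/eqP.
  rewrite -[m in RHS]card_ord -cardsT /hweight; apply: eq_card => j.
  by rewrite !inE H.
apply/existsP; exists ((0 : 'F_q), j); rewrite !betaE /=.
by move: hj; rewrite !mxE subr_eq0 => /eqP ->.
Qed.
Unset Implicit Arguments.
Theorem theorem1p1 (q m : nat) (C : {set 'rV['F_q]_m}) :
  prime q -> (0 < m)%N ->
  cyclic_code C ->
  (exists2 c, c \in C & c != 0) ->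
  (forall c, c \in C -> hweight c != m) ->
  [transitive GC C, on [set: Vtype q m] | 'P] /\
  int_density (GC C) = q%:R.
Proof.
move=> qp m0 cC nz hw; split; first exact: GC_trans.
have q0 : (0 < q)%N by apply: prime_gt0.
pose s := #|C0 C (Ordinal m0)|.
have Cs : #|C| = (q * s)%N by rewrite card_C0.
have s0 : (0 < s)%N.
  by apply/card_gt0P; exists 0; rewrite !inE code_0 //= mxE.
have stab : forall v : Vtype q m, #|('C_(GC C)[v | 'P])%g| = s.
  move=> v; rewrite stab_eq // card_imset; last exact: beta_inj'.
  by apply/eqP; rewrite -(eqn_pmul2l q0) card_C0 // -Cs.
rewrite /int_density.
have -> : max_stab (GC C) = s.
  apply/eqP; rewrite eqn_leq; apply/andP; split.
    by apply/bigmax_leqP => v _; rewrite stab.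
  by rewrite -(stab ((0 : 'F_q), Ordinal m0)); apply: (leq_bigmax_cond (F := fun v => #|('C_(GC C)[v | 'P])%g|)).
have -> : max_intersecting (GC C) = #|C|.
  apply/eqP; rewrite eqn_leq; apply/andP; split.
    by apply/bigmax_leqP => F /andP [sF iF]; apply: inter_upper.
  rewrite -(card_imset C (@beta_inj' q m)).
  exact: (@leq_bigmax_cond _ (fun F : {set {perm Vtype q m}} => (F \subset GC C) && intersecting F) (fun F : {set {perm Vtype q m}} => #|F|) _ (inter_lower cC hw)).
rewrite Cs natrM mulfK // Num.Theory.pnatr_eq0 -lt0n //.
Qed.
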